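(* Let $n\ge1$ and let $A_1,\dots,A_n$ be events in a probability space. Then \[ \Pr\Big(\bigcup_{i=1}^n A_i\Big) \;\ge\; \frac{1}{\lceil n/2\rceil}\Big(\sum_{i=1}^n\Pr(A_i) - \frac{2}{n}\sum_{1\le i<j\le n}\Pr(A_i\cap A_j)\Big). \] *)

(* Defs.v *)
From Stdlib Require Import Reals Lra Lia.
Open Scope R_scope.

Record prob_space (T : Type) := ProbSpace {
  measurable : (T -> Prop) -> Prop;
  measurable_full : measurable (fun _ => True);
  measurable_compl : forall A, measurable A -> measurable (fun x => ~ A x);
  measurable_cunion : forall F : nat -> T -> Prop,
      (forall k, measurable (F k)) -> measurable (fun x => exists k, F k x);
  Pr : (T -> Prop) -> R;
  Pr_nonneg : forall A, measurable A -> 0 <= Pr A;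
  Pr_full : Pr (fun _ => True) = 1;
  Pr_sigma_additive : forall F : nat -> T -> Prop,
      (forall k, measurable (F k)) ->
      (forall k l x, k <> l -> F k x -> F l x -> False) ->
      infinite_sum (fun k => Pr (F k)) (Pr (fun x => exists k, F k x))
}.
Arguments measurable {T} _ _.
Arguments Pr {T} _ _.

Fixpoint sumR (n : nat) (f : nat -> R) : R :=
  match n with
  | O => 0
  | S k => sumR k f + f k
  end.

Definition ceil_half (n : nat) : nat := Nat.div (n + 1) 2.

(* Main.v *)
Require Import Defs.
From Stdlib Require Import Reals Lra Lia ZArith Classical FunctionalExtensionality PropExtensionality.
Open Scope R_scope.

Lemma set_eq {T} (F G : T -> Prop) : (forall x, F x <-> G x) -> F = G.
Proof. intros H; apply functional_extensionality; intros x; apply propositional_extensionality; apply H. Qed.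

Lemma meas_empty {T} (P : prob_space T) : measurable P (fun _ => False).
Proof.
  replace (fun _ : T => False) with (fun x : T => ~ (fun _ : T => True) x).
  - apply measurable_compl, measurable_full.
  - apply set_eq; intros x; simpl; tauto.
Qed.

Lemma meas_union {T} (P : prob_space T) X Y :
  measurable P X -> measurable P Y -> measurable P (fun x => X x \/ Y x).
Proof.
  intros HX HY.
  replace (fun x => X x \/ Y x) with
    (fun x => exists k, (fun k => match k with O => X | _ => Y end) k x).
  - apply measurable_cunion. intros [|k]; auto.
  - apply set_eq; intros x; split.
    + intros [[|k] H]; auto.
    + intros [H|H]; [exists O | exists 1%nat]; auto.
Qed.

Lemma meas_inter {T} (P : prob_space T) X Y :
  measurable P X -> measurable P Y -> measurable P (fun x => X x /\ Y x).
Proof.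
  intros HX HY.
  replace (fun x => X x /\ Y x) with (fun x => ~ ((fun x => ~ X x \/ ~ Y x) x)).
  - apply measurable_compl, meas_union; apply measurable_compl; auto.
  - apply set_eq; intros x; simpl; split.
    + intros H. destruct (classic (X x)), (classic (Y x)); tauto.
    + tauto.
Qed.

Lemma Pr_empty {T} (P : prob_space T) : Pr P (fun _ => False) = 0.
Proof.
  pose proof (Pr_sigma_additive _ P (fun _ => fun _ => False)) as H.
  cbv beta in H.
  specialize (H (fun _ => meas_empty P) (fun k l x _ h _ => h)).
  assert (E: (fun x : T => exists _ : nat, False) = (fun _ => False))
    by (apply set_eq; intros x; split; [intros [_ h]; exact h | tauto]).
  rewrite E in H.
  pose proof (Pr_nonneg _ P _ (meas_empty P)) as Hn.
  set (c := Pr P (fun _ => False)) in *.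
  destruct (Rle_lt_or_eq_dec 0 c Hn) as [Hc|Hc]; [|auto].
  exfalso. destruct (H (c/2)) as [N HN]; [lra|].
  specialize (HN (S N) ltac:(lia)).
  rewrite sum_cte in HN. unfold R_dist in HN.
  rewrite S_INR, S_INR in HN. pose proof (pos_INR N).
  rewrite Rabs_right in HN; nra.
Qed.

Lemma Pr_add2 {T} (P : prob_space T) X Y : measurable P X -> measurable P Y ->
  (forall x, X x -> Y x -> False) -> Pr P (fun x => X x \/ Y x) = Pr P X + Pr P Y.
Proof.
  intros HX HY Hd.
  set (F := fun k:nat => match k with O => X | 1%nat => Y | _ => fun _ : T => False end).
  pose proof (Pr_sigma_additive _ P F) as H.
  assert (HF: forall k, measurable P (F k)) by (intros [|[|k]]; simpl; auto using meas_empty).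
  assert (HD: forall k l x, k<>l -> F k x -> F l x -> False).
  { intros [|[|k]] [|[|l]] x Hkl; simpl; intros H1 H2; try contradiction; eauto. }
  specialize (H HF HD).
  assert (E: (fun x => exists k, F k x) = fun x => X x \/ Y x).
  { apply set_eq; intros x; split.
    - intros [[|[|k]] h]; simpl in h; auto; contradiction.
    - intros [h|h]; [exists O|exists 1%nat]; exact h. }
  rewrite E in H.
  apply (uniqueness_sum _ _ _ H).
  intros eps Heps. exists 1%nat. intros n Hn.
  assert (Hs: sum_f_R0 (fun k => Pr P (F k)) n = Pr P X + Pr P Y).
  { induction n. lia. destruct n. simpl. reflexivity.
    rewrite tech5. rewrite IHn by lia. simpl F. rewrite Pr_empty. ring. }
  rewrite Hs. unfold R_dist. replace (Pr P X + Pr P Y - (Pr P X + Pr P Y)) with 0 by ring.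
  rewrite Rabs_R0; auto.
Qed.

Lemma Pr_split {T} (P : prob_space T) B A : measurable P B -> measurable P A ->
  Pr P B = Pr P (fun x => B x /\ A x) + Pr P (fun x => B x /\ ~ A x).
Proof.
  intros HB HA.
  rewrite <- Pr_add2.
  - f_equal. apply set_eq; intros x. destruct (classic (A x)); tauto.
  - apply meas_inter; auto.
  - apply meas_inter; auto. apply measurable_compl; auto.
  - intros x; tauto.
Qed.

Fixpoint EE {T} (P: prob_space T) (A: nat -> T -> Prop) (m:nat) (B: T->Prop) (g: nat -> R) : R :=
  match m with
  | O => g O * Pr P B
  | S m' => EE P A m' (fun x => B x /\ A m' x) (fun N => g (S N))
           + EE P A m' (fun x => B x /\ ~ A m' x) g
  end.

Lemma EE_lin {T} (P: prob_space T) A m : forall B f g h a b c,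
  EE P A m B (fun N => a * f N + b * g N + c * h N) =
  a * EE P A m B f + b * EE P A m B g + c * EE P A m B h.
Proof.
  induction m; intros; simpl. ring.
  rewrite (IHm _ (fun N => f (S N)) (fun N => g (S N)) (fun N => h (S N))), IHm. ring.
Qed.

Lemma EE_nonneg {T} (P: prob_space T) A m : (forall i, (i < m)%nat -> measurable P (A i)) ->
  forall B g, measurable P B -> (forall N, (N <= m)%nat -> 0 <= g N) -> 0 <= EE P A m B g.
Proof.
  induction m; intros hA B g HB Hg; simpl.
  - apply Rmult_le_pos; [apply Hg; lia | apply Pr_nonneg; auto].
  - assert (hA' : forall i, (i < m)%nat -> measurable P (A i)) by (intros; apply hA; lia).
    apply Rplus_le_le_0_compat; apply IHm; auto;
      try (intros N HN; apply Hg; lia);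
      apply meas_inter; auto; apply measurable_compl; auto.
Qed.

Lemma EE_ext {T} (P: prob_space T) A m B f g : (forall N, f N = g N) -> EE P A m B f = EE P A m B g.
Proof. intros H. replace f with g; auto. apply functional_extensionality; auto. Qed.

Lemma EE_one {T} (P: prob_space T) A m : (forall i, (i < m)%nat -> measurable P (A i)) ->
  forall B, measurable P B -> EE P A m B (fun _ => 1) = Pr P B.
Proof.
  induction m; intros hA B HB; simpl. ring.
  assert (hA' : forall i, (i < m)%nat -> measurable P (A i)) by (intros; apply hA; lia).
  rewrite !IHm; auto.
  - symmetry; apply Pr_split; auto.
  - apply meas_inter; auto. apply measurable_compl; auto.
  - apply meas_inter; auto.
Qed.

Lemma sumR_ext n f g : (forall i, (i < n)%nat -> f i = g i) -> sumR n f = sumR n g.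
Proof. induction n; intros H; simpl; auto. rewrite IHn, H; auto. Qed.

Lemma sumR_plus n f g : sumR n f + sumR n g = sumR n (fun i => f i + g i).
Proof. induction n; simpl. ring. rewrite <- IHn. ring. Qed.

Lemma EE_N {T} (P: prob_space T) A m : (forall i, (i < m)%nat -> measurable P (A i)) ->
  forall B, measurable P B -> EE P A m B INR = sumR m (fun i => Pr P (fun x => B x /\ A i x)).
Proof.
  induction m; intros hA B HB; [simpl; ring|cbn [EE sumR]].
  assert (hA' : forall i, (i < m)%nat -> measurable P (A i)) by (intros; apply hA; lia).
  assert (M1 : measurable P (fun x => B x /\ A m x)) by (apply meas_inter; auto).
  assert (M2 : measurable P (fun x => B x /\ ~ A m x)) by (apply meas_inter; auto; apply measurable_compl; auto).
  rewrite (EE_ext P A m _ _ (fun N => 1 * INR N + 1 * 1 + 0 * 0)) by (intros; rewrite S_INR; ring).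
  rewrite EE_lin, EE_one, !IHm; auto.
  transitivity (sumR m (fun i => Pr P (fun x => (B x /\ A m x) /\ A i x)) +
     sumR m (fun i => Pr P (fun x => (B x /\ ~ A m x) /\ A i x)) + Pr P (fun x => B x /\ A m x)).
  { ring. }
  f_equal. rewrite sumR_plus. apply sumR_ext. intros i Hi.
  rewrite (Pr_split P (fun x => B x /\ A i x) (A m)) by (try apply meas_inter; auto).
  f_equal; f_equal; apply set_eq; intros x; tauto.
Qed.

Definition g2 (N : nat) : R := INR N * (INR N - 1) / 2.

Lemma EE_pair {T} (P: prob_space T) A m : (forall i, (i < m)%nat -> measurable P (A i)) ->
  forall B, measurable P B -> EE P A m B g2 =
   sumR m (fun j => sumR j (fun i => Pr P (fun x => B x /\ (A i x /\ A j x)))).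
Proof.
  induction m; intros hA B HB; [cbn [EE sumR]; unfold g2; cbn [INR]; field|cbn [EE sumR]].
  assert (hA' : forall i, (i < m)%nat -> measurable P (A i)) by (intros; apply hA; lia).
  assert (M1 : measurable P (fun x => B x /\ A m x)) by (apply meas_inter; auto).
  assert (M2 : measurable P (fun x => B x /\ ~ A m x)) by (apply meas_inter; auto; apply measurable_compl; auto).
  rewrite (EE_ext P A m _ _ (fun N => 1 * g2 N + 1 * INR N + 0 * 0)) by (intros; unfold g2; rewrite S_INR; field).
  rewrite EE_lin, EE_N, !IHm; auto.
  transitivity (
   sumR m (fun j => sumR j (fun i => Pr P (fun x => (B x /\ A m x) /\ (A i x /\ A j x)))) +
   sumR m (fun j => sumR j (fun i => Pr P (fun x => (B x /\ ~ A m x) /\ (A i x /\ A j x)))) +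
   sumR m (fun i => Pr P (fun x => (B x /\ A m x) /\ A i x))).
  { ring. }
  f_equal.
  - rewrite sumR_plus. apply sumR_ext. intros j Hj.
    rewrite sumR_plus. apply sumR_ext. intros i Hi.
    rewrite (Pr_split P (fun x => B x /\ (A i x /\ A j x)) (A m))
      by (try apply meas_inter; try apply meas_inter; auto; apply hA'; lia).
    f_equal; f_equal; apply set_eq; intros x; tauto.
  - apply sumR_ext. intros i Hi. f_equal; apply set_eq; intros x; tauto.
Qed.

Definition ind (N : nat) : R := match N with O => 0 | _ => 1 end.

Lemma meas_U {T} (P: prob_space T) A m : (forall i, (i < m)%nat -> measurable P (A i)) ->
  measurable P (fun x => exists i, (i < m)%nat /\ A i x).
Proof.
  induction m; intros hA.
  - replace (fun x => exists i, (i < 0)%nat /\ A i x) with (fun _ : T => False).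
    + apply meas_empty.
    + apply set_eq; intros x; split; [tauto|]. intros [i [Hi _]]; lia.
  - replace (fun x => exists i, (i < S m)%nat /\ A i x) with
      (fun x => (exists i, (i < m)%nat /\ A i x) \/ A m x).
    + apply meas_union; [apply IHm; intros; apply hA; lia | apply hA; lia].
    + apply set_eq; intros x; split.
      * intros [[i [Hi H]]|H]; [exists i|exists m]; split; auto; lia.
      * intros [i [Hi H]]. destruct (Nat.eq_dec i m); [subst; auto|left; exists i; split; auto; lia].
Qed.

Lemma EE_ind {T} (P: prob_space T) A m : (forall i, (i < m)%nat -> measurable P (A i)) ->
  forall B, measurable P B -> EE P A m B ind =
   Pr P (fun x => B x /\ exists i, (i < m)%nat /\ A i x).
Proof.
  induction m; intros hA B HB.
  - simpl. unfold ind. replace (fun x => B x /\ exists i, (i < 0)%nat /\ A i x) with (fun _ : T => False).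
    + rewrite Pr_empty; ring.
    + apply set_eq; intros x; split; [tauto|]. intros [_ [i [Hi _]]]; lia.
  - cbn [EE].
    assert (hA' : forall i, (i < m)%nat -> measurable P (A i)) by (intros; apply hA; lia).
    assert (M1 : measurable P (fun x => B x /\ A m x)) by (apply meas_inter; auto).
    assert (M2 : measurable P (fun x => B x /\ ~ A m x)) by (apply meas_inter; auto; apply measurable_compl; auto).
    rewrite (EE_ext P A m _ _ (fun _ => 1)) by (intros; reflexivity).
    rewrite EE_one, IHm; auto.
    rewrite (Pr_split P (fun x => B x /\ exists i, (i < S m)%nat /\ A i x) (A m)).
    + f_equal; f_equal; apply set_eq; intros x; split.
      * intros [H1 H2]. split; [split; [auto| exists m; split; auto]|auto].
      * intros [[H1 _] H3]. split; auto.
      * intros [[H1 H3] [i [Hi H2]]]. split; [split; [auto| exists i; split; auto]|auto].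
      * intros [[H1 [i [Hi H2]]] H3]. split; [split; auto|].
        destruct (Nat.eq_dec i m); [subst; tauto|]. exists i; split; auto; lia.
    + apply meas_inter; auto. apply meas_U; auto.
    + auto.
Qed.

Lemma key_nat n N : (1 <= n)%nat -> (N <= n)%nat ->
  (N * (n + 1) <= n * ceil_half n + N * N)%nat.
Proof.
  intros Hn HN. unfold ceil_half.
  pose proof (Nat.div_mod (n+1)%nat 2 ltac:(lia)) as E.
  pose proof (Nat.mod_upper_bound (n+1)%nat 2 ltac:(lia)) as U.
  set (k := ((n+1)/2)%nat) in *. set (r := ((n+1) mod 2)%nat) in *.
  clearbody k r.
  assert (r = 0 \/ r = 1)%nat as [Hr|Hr] by lia; subst r.
  - assert (1 <= k)%nat by lia.
    assert (0 <= (Z.of_nat k - Z.of_nat N) * (Z.of_nat k - Z.of_nat N))%Z by apply Z.square_nonneg.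
    assert (k <= k * k)%nat by nia. nia.
  - assert (1 <= k)%nat by lia.
    assert (0 <= (Z.of_nat N - Z.of_nat k) * (Z.of_nat N - Z.of_nat k - 1))%Z.
    { destruct (Z_le_gt_dec (Z.of_nat N) (Z.of_nat k)); nia. }
    nia.
Qed.

Lemma key_R n N : (1 <= n)%nat -> (N <= n)%nat ->
  0 <= INR (ceil_half n) * ind N + (-1) * INR N + (2 / INR n) * g2 N.
Proof.
  intros Hn HN. pose proof (key_nat n N Hn HN) as K.
  apply le_INR in K. repeat rewrite ?mult_INR, ?plus_INR in K. simpl (INR 1) in K.
  assert (Hn' : 0 < INR n) by (apply lt_0_INR; lia).
  unfold g2, ind. destruct N as [|N'].
  - cbn [INR]. unfold Rdiv. rewrite !Rmult_0_l, !Rmult_0_r. lra.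
  - set (N := S N') in *.
    apply Rmult_le_reg_l with (INR n); auto.
    rewrite Rmult_0_r.
    replace (INR n * (INR (ceil_half n) * 1 + -1 * INR N + 2 / INR n * (INR N * (INR N - 1) / 2)))
      with (INR n * INR (ceil_half n) - INR N * (INR n + 1) + INR N * INR N) by (field; lra).
    lra.
Qed.

Theorem corollary2 (T : Type) (P : prob_space T) (n : nat) (A : nat -> T -> Prop)
  (hn : (1 <= n)%nat)
  (hA : forall i, (i < n)%nat -> measurable P (A i)) :
  Pr P (fun x => exists i, (i < n)%nat /\ A i x) >=
  / INR (ceil_half n) *
    (sumR n (fun i => Pr P (A i))
     - 2 / INR n *
       sumR n (fun j => sumR j (fun i => Pr P (fun x => A i x /\ A j x)))).
Proof.
  pose proof (EE_nonneg P A n hA (fun _ => True) _ (measurable_full _ P) (fun N HN => key_R n N hn HN)) as H.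
  rewrite EE_lin, EE_ind, EE_N, EE_pair in H; auto using measurable_full.
  assert (E1 : (fun x => True /\ exists i, (i < n)%nat /\ A i x) = (fun x => exists i, (i < n)%nat /\ A i x))
    by (apply set_eq; intros; tauto).
  assert (E2 : sumR n (fun i => Pr P (fun x => True /\ A i x)) = sumR n (fun i => Pr P (A i))).
  { apply sumR_ext; intros; f_equal; apply set_eq; intros; tauto. }
  assert (E3 : sumR n (fun j => sumR j (fun i => Pr P (fun x => True /\ (A i x /\ A j x)))) =
               sumR n (fun j => sumR j (fun i => Pr P (fun x => A i x /\ A j x)))).
  { apply sumR_ext; intros; apply sumR_ext; intros; f_equal; apply set_eq; intros; tauto. }
  rewrite E1, E2, E3 in H.
  assert (Hk : 0 < INR (ceil_half n)).
  { apply lt_0_INR. unfold ceil_half. apply Nat.div_str_pos. lia. }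
  apply Rle_ge.
  apply Rmult_le_reg_l with (INR (ceil_half n)); auto.
  rewrite <- Rmult_assoc, Rinv_r, Rmult_1_l by lra.
  lra.
Qed.
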